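(* Let $s\ge2$ groups of positive integer moduli be given: Group $j$ ($1\le j\le s$) consists of $L_j\ge1$ moduli $0<M_{j,1}<\dots<M_{j,L_j}$; put $\delta_j=\operatorname{lcm}(M_{j,1},\dots,M_{j,L_j})$, assumed pairwise distinct. Let $T_1,\dots,T_k$ ($k\ge2$) be nonempty subsets of $\{1,\dots,s\}$ whose union is $\{1,\dots,s\}$ (the second-stage groups), let $\xi_t=\operatorname{lcm}\{\delta_j:j\in T_t\}$, assumed pairwise distinct. Let $N$ be an integer with $0\le N<\operatorname{lcm}(\delta_1,\dots,\delta_s)$, let $r_{j,i}$ be the remainder of $N$ modulo $M_{j,i}$ and $n_{j,i}=(N-r_{j,i})/M_{j,i}$. Define $G_j=\max_{i}\min_{q\ne i}\gcd(M_{j,i},M_{j,q})/4$ if $L_j\ge2$ and $G_j=M_{j,1}/4$ if $L_j=1$; $\Upsilon_t=\max_{a\in T_t}\min_{b\in T_t,b\ne a}\gcd(\delta_a,\delta_b)/4$ if $|T_t|\ge2$ and $\Upsilon_t=\delta_a/4$ if $T_t=\{a\}$; and $\Upsilon=\max_{1\le i\le k}\min_{q\ne i}\gcd(\xi_i,\xi_q)/4$. Let $\tilde r_{j,i}$ be integers with $0\le\tilde r_{j,i}\le M_{j,i}-1$ and $|\tilde r_{j,i}-r_{j,i}|\le\tau_j$ for all $i,j$, where $$\tau_j<\min\Big(G_j,\ \min\{\Upsilon_t: j\in T_t\},\ \Upsilon\Big)\quad(1\le j\le s).$$ Then the three-stage algorithm (described in the context) outputs $\hat n_{j,i}=n_{j,i}$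 for all $i,j$, and its estimate $\hat N=\left[\frac1{\sum_jL_j}\sum_{j=1}^s\sum_{i=1}^{L_j}(\hat n_{j,i}M_{j,i}+\tilde r_{j,i})\right]$ satisfies $|\hat N-N|\le\left[\frac{\sum_{j=1}^sL_j\tau_j}{\sum_{j=1}^sL_j}\right]$.
   Context: For $x\in\mathbb R$, $[x]$ denotes the unique integer with $-1/2\le x-[x]<1/2$. Single-stage algorithm $\mathcal A$: for pairwise distinct positive integers $P_1,\dots,P_m$ ($m\ge2$), a reference index $k$ and integers $x_1,\dots,x_m$: for $i\ne k$ put $m_{ki}=\gcd(P_k,P_i)$, $\Gamma_{ki}=P_k/m_{ki}$, $\Gamma_{ik}=P_i/m_{ki}$, $\hat q_{ik}=[(x_i-x_k)/m_{ki}]$, let $\bar\Gamma_{ki}$ be an inverse of $\Gamma_{ki}$ modulo $\Gamma_{ik}$ and $\hat\xi_{ik}\equiv\hat q_{ik}\bar\Gamma_{ki}\pmod{\Gamma_{ik}}$, $0\le\hat\xi_{ik}<\Gamma_{ik}$; let $\hat n_k$ be the least nonnegative $y$ with $y\equiv\hat\xi_{ik}\pmod{\Gamma_{ik}}$ for all $i\ne k$ (the algorithm fails if none exists), and $\hat n_i=(\hat n_k\Gamma_{ki}-\hat q_{ik})/\Gamma_{ik}$ for $i\ne k$. In each use below the reference index is one attaining the relevant max-min of pairwise gcds. Three-stage algorithm: Stage 1: for each $j$, if $L_j\ge2$ apply $\mathcal A$ to $M_{j,1},\dots,M_{j,L_j}$ with inputs $\tilde r_{j,i}$, obtaining $\hat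 K_{j,i}$; if $L_j=1$ set $\hat K_{j,1}=0$; put $\hat N_j=[\frac1{L_j}\sum_i(\hat K_{j,i}M_{j,i}+\tilde r_{j,i})]$. Stage 2: for each $t$, if $|T_t|\ge2$ apply $\mathcal A$ to the moduli $(\delta_j)_{j\in T_t}$ with inputs $(\hat N_j)_{j\in T_t}$, obtaining $\hat H_{t,j}$ ($j\in T_t$); if $|T_t|=1$ set $\hat H_{t,j}=0$; put $\hat P_t=[\frac1{|T_t|}\sum_{j\in T_t}(\hat H_{t,j}\delta_j+\hat N_j)]$. Stage 3: apply $\mathcal A$ to $\xi_1,\dots,\xi_k$ with inputs $\hat P_1,\dots,\hat P_k$, obtaining $\hat l_1,\dots,\hat l_k$. Output, for each $j$ and a $t$ with $j\in T_t$, $\hat n_{j,i}=\hat l_t\xi_t/M_{j,i}+\hat H_{t,j}\delta_j/M_{j,i}+\hat K_{j,i}$. *)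

(* Defs.v *)
From HB Require Import structures.
From mathcomp Require Import all_boot all_order all_algebra.
Set Implicit Arguments. Unset Strict Implicit. Unset Printing Implicit Defensive.
Import Order.TTheory GRing.Theory Num.Theory.

Local Open Scope ring_scope.

(* [x] : the unique integer with -1/2 <= x - [x] < 1/2, i.e. floor (x + 1/2). *)
Definition rnd {R : archiRealFieldType} (x : R) : int := Num.floor (x + 2^-1).

Definition mingcd (P : seq nat) (i : nat) : nat :=
  \big[minn/nth 0%N P i]_(q < size P | q != i :> nat) gcdn (nth 0%N P i) (nth 0%N P q).

Definition maxmin (P : seq nat) : nat := \max_(i < size P) mingcd P i.

Definition is_ref (P : seq nat) (k : nat) : Prop :=
  (k < size P)%N /\ mingcd P k = maxmin P.

(* Single-stage algorithm A : moduli P, inputs x, reference index k.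
   Returns None when it fails (no simultaneous solution of the congruences). *)
Definition algA (P : seq nat) (x : seq int) (k : nat) : option (seq int) :=
  let m := size P in
  let Pk := nth 0%N P k in
  let xk := nth 0 x k in
  let mk i := gcdn Pk (nth 0%N P i) in
  let Gki i := (Pk %/ mk i)%N in
  let Gik i := (nth 0%N P i %/ mk i)%N in
  let qh i : int := rnd (((nth 0 x i - xk)%:~R / (mk i)%:R) : rat) in
  (* \bar Gamma_ki : an inverse of Gamma_ki modulo Gamma_ik (Bezout coefficient) *)
  let Gbar i : int := (egcdz (Gki i)%:Z (Gik i)%:Z).1 in
  let xih i : int := ((qh i * Gbar i) %% (Gik i)%:Z)%Z in
  let idx := [seq i <- iota 0 m | i != k] in
  let cond (y : nat) := all (fun i => (y%:Z == xih i %[mod (Gik i)%:Z])%Z) idx in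
  (* the least nonnegative solution, if any, is below the product of the moduli *)
  let B := (\prod_(i <- idx) Gik i)%N in
  match [seq y <- iota 0 B | cond y] with
  | [::] => None
  | y :: _ =>
      Some [seq (if i == k then y%:Z else ((y%:Z * (Gki i)%:Z - qh i) %/ (Gik i)%:Z)%Z)
           | i <- iota 0 m]
  end.

Section ThreeStage.
Variables (s K : nat).
Variable M : 'I_s -> seq nat.          (* group j : moduli M_{j,0} < ... < M_{j,L_j - 1} *)
Variable T : 'I_K -> {set 'I_s}.
Variable rt : 'I_s -> nat -> int.
Variable k1 : 'I_s -> nat.
Variable k2 : 'I_K -> nat.
Variable k3 : nat.
Variable tsel : 'I_s -> 'I_K.          (* for each j, a t with j \in T_t *)

Definition L (j : 'I_s) : nat := size (M j).
Definition Mji (j : 'I_s) (i : nat) : nat := nth 0%N (M j) i.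
Definition delta (j : 'I_s) : nat := \big[lcmn/1%N]_(m <- M j) m.
Definition xi (t : 'I_K) : nat := \big[lcmn/1%N]_(j in T t) delta j.
Definition Tl (t : 'I_K) : seq 'I_s := enum (T t).
Definition deltas (t : 'I_K) : seq nat := [seq delta j | j <- Tl t].
Definition xis : seq nat := [seq xi t | t <- enum 'I_K].

Definition stage1 (j : 'I_s) : option (seq int) :=
  if (2 <= L j)%N then algA (M j) [seq rt j i | i <- iota 0 (L j)] (k1 j)
  else Some [:: 0].
Definition Khat (j : 'I_s) (i : nat) : int := nth 0 (odflt [::] (stage1 j)) i.
Definition Nhat1 (j : 'I_s) : int :=
  rnd (((L j)%:R^-1 * \sum_(i < L j) (Khat j i * (Mji j i)%:Z + rt j i)%:~R) : rat).

Definition stage2 (t : 'I_K) : option (seq int) :=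
  if (2 <= size (Tl t))%N then algA (deltas t) [seq Nhat1 j | j <- Tl t] (k2 t)
  else Some [:: 0].
Definition Hhat (t : 'I_K) (j : 'I_s) : int :=
  nth 0 (odflt [::] (stage2 t)) (index j (Tl t)).
Definition Phat (t : 'I_K) : int :=
  rnd (((#|T t|)%:R^-1 * \sum_(j in T t) (Hhat t j * (delta j)%:Z + Nhat1 j)%:~R) : rat).

Definition stage3 : option (seq int) :=
  algA xis [seq Phat t | t <- enum 'I_K] k3.
Definition lhat (t : 'I_K) : int := nth 0 (odflt [::] stage3) (index t (enum 'I_K)).

Definition three_stage_ok : bool :=
  [forall j, stage1 j != None] && [forall t, stage2 t != None] && (stage3 != None).

(* Output \hat n_{j,i}  (the divisions xi_t / M_{j,i}, delta_j / M_{j,i} are exact) *)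
Definition nhat (j : 'I_s) (i : nat) : int :=
  lhat (tsel j) * (xi (tsel j) %/ Mji j i)%:Z + Hhat (tsel j) j * (delta j %/ Mji j i)%:Z
  + Khat j i.

Definition Nhat : int :=
  rnd (((\sum_(j : 'I_s) L j)%:R^-1 *
        \sum_(j : 'I_s) \sum_(i < L j) (nhat j i * (Mji j i)%:Z + rt j i)%:~R) : rat).

Definition Gb {R : archiRealFieldType} (j : 'I_s) : R :=
  if (2 <= L j)%N then (maxmin (M j))%:R / 4 else (Mji j 0)%:R / 4.
Definition Ups_t {R : archiRealFieldType} (t : 'I_K) : R :=
  if (2 <= size (Tl t))%N then (maxmin (deltas t))%:R / 4 else (nth 0%N (deltas t) 0)%:R / 4.
Definition Ups {R : archiRealFieldType} : R := (maxmin xis)%:R / 4.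

End ThreeStage.

(* Main.v *)
Require Import Defs.
From HB Require Import structures.
From mathcomp Require Import all_boot all_order all_algebra.
From mathcomp Require Import zify ring lra.
Import Order.TTheory GRing.Theory Num.Theory.
Local Open Scope ring_scope.


Lemma divz_bounds (a b : int) : 0 < b -> (a %/ b)%Z * b <= a < ((a %/ b)%Z + 1) * b.
Proof. move=> hb; lia. Qed.

Lemma floor_divz (F : archiRealFieldType) (a b : int) : 0 < b ->
  Num.floor ((a%:~R : F) / b%:~R) = (a %/ b)%Z.
Proof.
move=> hb; apply: floor_def.
have hbF : (0 : F) < b%:~R by rewrite ltr0z.
have [h1 h2] := andP (divz_bounds a b hb).
rewrite ler_pdivlMr // ltr_pdivrMr // -!intrM ler_int ltr_int h1 /=.
done.
Qed.

Lemma rnd_div (F : archiRealFieldType) (p : int) (n : nat) : (0 < n)%N ->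
  rnd ((p%:~R : F) / n%:R) = ((2 * p + n%:Z) %/ (2 * n%:Z))%Z.
Proof.
move=> hn; rewrite /rnd -(floor_divz F); last lia.
congr Num.floor.
have hnF : (n%:R : F) != 0 by rewrite pnatr_eq0 -lt0n.
rewrite intrD !intrM /= -[(n%:Z)%:~R]/(n%:R : F).
field. exact: hnF.
Qed.

Lemma divz_uniq (a b q : int) : 0 < b -> q * b <= a < (q + 1) * b -> (a %/ b)%Z = q.
Proof. move=> hb /andP[h1 h2]; have /andP[h3 h4] := divz_bounds a b hb. nia. Qed.

Lemma qh_val (Pk Pi Nin : nat) (xk xi : int) :
  (0 < Pk)%N -> (0 < Pi)%N ->
  (4 * `|xi - (Nin %% Pi)%:Z| < gcdn Pk Pi)%N ->
  (4 * `|xk - (Nin %% Pk)%:Z| < gcdn Pk Pi)%N ->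
  rnd (((xi - xk)%:~R / (gcdn Pk Pi)%:R) : rat) =
    (Nin %/ Pk)%:Z * (Pk %/ gcdn Pk Pi)%:Z - (Nin %/ Pi)%:Z * (Pi %/ gcdn Pk Pi)%:Z.
Proof.
move=> hk hi hdi hdk.
set g := gcdn Pk Pi.
have g0 : (0 < g)%N by rewrite gcdn_gt0 hk.
rewrite rnd_div //.
apply: divz_uniq; first lia.
have e1 : (Pk %/ g * g = Pk)%N by rewrite divnK // dvdn_gcdl.
have e2 : (Pi %/ g * g = Pi)%N by rewrite divnK // dvdn_gcdr.
have e3 := divn_eq Nin Pk.
have e4 := divn_eq Nin Pi.
move: e1 e2 e3 e4 hdi hdk.
set a := (Pk %/ g)%N; set b := (Pi %/ g)%N; set c := (Nin %/ Pk)%N; set d := (Nin %/ Pi)%N.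
set rk := (Nin %% Pk)%N; set ri := (Nin %% Pi)%N.
move=> e1 e2 e3 e4 hdi hdk.
nia.
Qed.

Lemma coprime_divg (a b : nat) : (0 < a)%N ->
  coprime (a %/ gcdn a b)%N (b %/ gcdn a b)%N.
Proof.
move=> ha; rewrite /coprime.
have g0 : (0 < gcdn a b)%N by rewrite gcdn_gt0 ha.
have := muln_gcdl (a %/ gcdn a b)%N (b %/ gcdn a b)%N (gcdn a b).
rewrite !divnK ?dvdn_gcdl ?dvdn_gcdr // => e.
by rewrite -(eqn_pmul2r g0) mul1n e.
Qed.

Lemma xih_val (Gki Gik : nat) (nk ni : int) : (0 < Gik)%N -> coprime Gki Gik ->
  modz (modz ((nk * Gki%:Z - ni * Gik%:Z) * (egcdz Gki%:Z Gik%:Z).1) Gik%:Z) Gik%:Z = modz nk Gik%:Z.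
Proof.
move=> hG hc; rewrite modz_mod.
case: egcdzP => u v e /= _.
have e1 : gcdz Gki Gik = 1 by rewrite /gcdz /=; apply/eqP.
rewrite e1 in e.
have -> : (nk * Gki%:Z - ni * Gik%:Z) * u = (- ni * u - nk * v) * Gik%:Z + nk * (u * Gki%:Z + v * Gik%:Z).
  by ring.
by rewrite e mulr1 modzMDl.
Qed.

Lemma biglcm_dvd (P : seq nat) (z : nat) :
  (forall m, m \in P -> m %| z)%N -> (\big[lcmn/1%N]_(m <- P) m %| z)%N.
Proof.
elim: P => [|a P IH] h; first by rewrite big_nil dvd1n.
rewrite big_cons dvdn_lcm h ?mem_head //= IH // => m hm.
by apply: h; rewrite in_cons hm orbT.
Qed.

Lemma dvd_biglcm (P : seq nat) (m : nat) : m \in P -> (m %| \big[lcmn/1%N]_(x <- P) x)%N.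
Proof.
elim: P => [|a P IH] //; rewrite in_cons big_cons => /orP[/eqP->|h].
  by rewrite dvdn_lcml.
by apply: dvdn_trans (IH h) _; rewrite dvdn_lcmr.
Qed.

Lemma dvd_bigprod (I : eqType) (r : seq I) (F : I -> nat) (i : I) :
  i \in r -> (F i %| \prod_(x <- r) F x)%N.
Proof. by move=> h; rewrite (big_rem i) //= dvdn_mulr. Qed.

Lemma biglcm_gt0 (P : seq nat) : (forall m, m \in P -> 0 < m)%N -> (0 < \big[lcmn/1%N]_(m <- P) m)%N.
Proof.
elim: P => [|a P IH] h; first by rewrite big_nil.
rewrite big_cons lcmn_gt0 h ?mem_head //= IH // => m hm.
by apply: h; rewrite in_cons hm orbT.
Qed.

Lemma mingcd_le (P : seq nat) (k i : nat) : (i < size P)%N -> i != k ->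
  (mingcd P k <= gcdn (nth 0%N P k) (nth 0%N P i))%N.
Proof.
move=> hi hik; rewrite /mingcd -minEnat.
exact: (bigmin_le_cond _ (j := Ordinal hi) (P := fun q : 'I_(size P) => q != k :> nat)
   (fun q : 'I_(size P) => gcdn (nth 0%N P k) (nth 0%N P q))).
Qed.


Lemma algA_correct (P : seq nat) (x : seq int) (k Nin : nat) :
  (forall i, (i < size P)%N -> (0 < nth 0%N P i)%N) ->
  (k < size P)%N ->
  (Nin < \big[lcmn/1%N]_(m <- P) m)%N ->
  (forall i, (i < size P)%N -> (4 * absz (nth 0%R x i - (Nin %% nth 0%N P i)%N%:Z) < mingcd P k)%N) ->
  algA P x k = Some [seq (Nin %/ nth 0%N P i)%N%:Z | i <- iota 0 (size P)].
Proof.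
move=> hP hk hN hd.
rewrite /algA.
have hPk := hP k hk.
set idx := [seq i <- iota 0 (size P) | i != k].
have memidx : forall i, i \in idx -> (i < size P)%N /\ i != k.
  by move=> i; rewrite mem_filter mem_iota add0n => /andP[-> /andP[_ ->]].
set nk := (Nin %/ nth 0%N P k)%N.
pose g i := gcdn (nth 0%N P k) (nth 0%N P i).
pose Gik i := (nth 0%N P i %/ g i)%N.
pose Gki i := (nth 0%N P k %/ g i)%N.
have hq : forall i, (i < size P)%N -> i != k ->
   rnd (((x`_i - x`_k)%:~R / (gcdn (nth 0%N P k) (nth 0%N P i))%:R) : rat) =
   nk%:Z * (Gki i)%:Z - (Nin %/ nth 0%N P i)%N%:Z * (Gik i)%:Z.
  move=> i hi hik; apply: qh_val; [exact: hPk | exact: hP | |].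
    have h1 := hd i hi; have h2 := mingcd_le P k i hi hik; lia.
  have h1 := hd k hk; have h2 := mingcd_le P k i hi hik; lia.
have gpos : forall i, (i < size P)%N -> (0 < g i)%N.
  by move=> i hi; rewrite gcdn_gt0 hPk.
have Gikpos : forall i, (i < size P)%N -> (0 < Gik i)%N.
  by move=> i hi; rewrite divn_gt0 ?gpos // dvdn_leq ?hP // dvdn_gcdr.
pose cond' (y : nat) := all (fun i => (y == nk %[mod Gik i])%N) idx.
rewrite (eq_filter (a2 := cond')); last first.
  move=> y; apply: eq_in_all => i /memidx[hi hik].
  rewrite hq // xih_val ?Gikpos //; last exact: coprime_divg.
  by rewrite !modz_nat eqz_nat.
have hdivP : forall z, (forall i, i \in idx -> Gik i %| z)%N ->
    (\big[lcmn/1%N]_(m <- P) m %| nth 0%N P k * z)%N.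
  move=> z hz; apply: biglcm_dvd => m hm.
  have hi : (index m P < size P)%N by rewrite index_mem.
  rewrite -(nth_index 0%N hm).
  case: (eqVneq (index m P) k) => [->|hik]; first exact: dvdn_mulr.
  have hin : index m P \in idx by rewrite mem_filter hik mem_iota add0n hi.
  apply: dvdn_trans (dvdn_mul (dvdnn (nth 0%N P k)) (hz _ hin)).
  rewrite /Gik /g muln_divA ?dvdn_gcdr // -divn_mulAC ?dvdn_gcdl //.
  exact: dvdn_mull.
have lcm0 : (0 < \big[lcmn/1%N]_(m <- P) m)%N.
  apply: biglcm_gt0 => m hm; rewrite -(nth_index 0%N hm); apply: hP.
  by rewrite index_mem.
set B := \prod_(i <- idx) _.
have hB : (nk < B)%N.
  have h1 : (\big[lcmn/1%N]_(m <- P) m %| nth 0%N P k * B)%N.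
    by apply: hdivP => i hi; exact: (dvd_bigprod _ _ Gik _ hi).
  have B0 : (0 < B)%N.
    rewrite /B big_seq_cond; apply: prodn_cond_gt0 => i /andP[/memidx[hi _] _].
    exact: Gikpos.
  have h2 : (\big[lcmn/1%N]_(m <- P) m <= nth 0%N P k * B)%N.
    by apply: dvdn_leq h1; rewrite muln_gt0 hPk B0.
  rewrite /nk ltn_divLR //; rewrite mulnC; exact: leq_trans hN h2.
have hlt : forall y, (y < nk)%N -> ~~ cond' y.
  move=> y hy; apply/negP => hc.
  have h1 : (\big[lcmn/1%N]_(m <- P) m %| nth 0%N P k * (nk - y))%N.
    apply: hdivP => i hi; move/allP: hc => /(_ i hi).
    by rewrite eq_sym eqn_mod_dvd // ltnW.
  have h2 : (\big[lcmn/1%N]_(m <- P) m <= nth 0%N P k * (nk - y))%N.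
    by apply: dvdn_leq h1; rewrite muln_gt0 hPk subn_gt0 hy.
  have h3 : (nth 0%N P k * (nk - y) <= Nin)%N.
    apply: leq_trans (leq_divM Nin (nth 0%N P k)).
    by rewrite mulnC leq_mul2r leq_subr orbT.
  by move: (leq_trans h2 h3); rewrite leqNgt hN.
have hcnk : cond' nk by apply/allP => i _.
rewrite -(subnKC (ltnW hB)) iotaD filter_cat.
rewrite (eq_in_filter (a2 := pred0)); last first.
  by move=> y; rewrite mem_iota add0n => /andP[_ /hlt /negbTE ->].
rewrite filter_pred0 cat0s add0n.
case eBn: (B - nk)%N => [|n]; first by move: hB; rewrite -subn_gt0 eBn.
rewrite /= hcnk; congr Some.
apply/eq_in_map => i; rewrite mem_iota add0n => /andP[_ hi].
case: eqP => [->//|/eqP hik].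
rewrite hq // opprB addrC subrK mulzK //.
by rewrite eqz_nat -lt0n Gikpos.
Qed.


Lemma rnd_core (S : int) (n : nat) (c0 c : int) : (0 < n)%N ->
  `|S - n%:Z * c0| <= n%:Z * c ->
  `|((2 * S + n%:Z) %/ (2 * n%:Z))%Z - c0| <= c.
Proof.
move=> hn hS.
have hb : 0 < 2 * n%:Z by lia.
have /andP[h1 h2] := divz_bounds (2 * S + n%:Z) (2 * n%:Z) hb.
move: h1 h2; set q := ((2 * S + n%:Z) %/ (2 * n%:Z))%Z => h1 h2.
have hn' : 0 < n%:Z by lia.
nia.
Qed.

Lemma avg_eq (F : fieldType) (I : finType) (A : {pred I}) (f : I -> int) :
  (#|A|%:R^-1 * \sum_(i in A) (f i)%:~R : F) = (\sum_(i in A) f i)%:~R / #|A|%:R.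
Proof. by rewrite mulrC rmorph_sum. Qed.

Lemma rnd_avg (I : finType) (A : {pred I}) (B : nat) (f : I -> int) (c0 : int) :
  (0 < #|A|)%N ->
  (forall i, i \in A -> 4 * absz (f i - c0) < B)%N ->
  (4 * absz (rnd ((#|A|%:R^-1 * \sum_(i in A) (f i)%:~R) : rat) - c0) < B)%N.
Proof.
move=> hn hf.
rewrite avg_eq rnd_div //.
set c : int := ((B - 1) %/ 4)%N.
have hc : (forall i, i \in A -> `|f i - c0| <= c).
  move=> i hi; have := hf i hi; rewrite /c -abszE lez_nat; lia.
have := rnd_core (\sum_(i in A) f i) #|A| c0 c hn.
have e : \sum_(i in A) f i - #|A|%:Z * c0 = \sum_(i in A) (f i - c0).
  by rewrite sumrB sumr_const -mulr_natl natz.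
rewrite e.
have hs : `|\sum_(i in A) (f i - c0)| <= #|A|%:Z * c.
  apply: le_trans (ler_norm_sum _ _ _) _.
  apply: le_trans (ler_sum _ hc) _.
  by rewrite sumr_const -mulr_natl natz.
move=> /(_ hs).
move: (_ - c0) => z hz.
rewrite -abszE in hz; rewrite /c in hz.
have : (absz z <= (B - 1) %/ 4)%N by rewrite -lez_nat.
have [i0 hi0] := card_gt0P hn.
have := hf i0 hi0; lia.
Qed.

Lemma final_core (R : archiRealFieldType) (S N : int) (n : nat) (T : R) :
  (0 < n)%N -> ((S - n%:Z * N)%:~R <= T) -> ((n%:Z * N - S)%:~R <= T) ->
  `|((2 * S + n%:Z) %/ (2 * n%:Z))%Z - N| <= rnd (T / n%:R).
Proof.
move=> hn h1 h2.
have hb : 0 < 2 * n%:Z by lia.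
have /andP[d1 d2] := divz_bounds (2 * S + n%:Z) (2 * n%:Z) hb.
move: d1 d2; set q := ((2 * S + n%:Z) %/ (2 * n%:Z))%Z => d1 d2.
have nR : (0 : R) < n%:R by rewrite ltr0n.
have e : T / n%:R + 2^-1 = (2 * T + n%:R) / (2 * n%:R).
  by field; rewrite pnatr_eq0 -lt0n hn.
have n2 : (0 : R) < 2 * n%:R by rewrite mulr_gt0 // ltr0n.
rewrite ler_norml /rnd e; apply/andP; split.
- rewrite lerNl floor_ge_int ler_pdivlMr // -[n%:R]/((n%:Z)%:~R : R).
  have i1 : (N - q) * (2 * n%:Z) <= 2 * (n%:Z * N - S) + n%:Z by nia.
  have := i1; rewrite -(ler_int R) => i2.
  move: i2 h2; rewrite !(intrD, intrM, intrN, rmorph1) /=. nra.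
- rewrite floor_ge_int ler_pdivlMr //.
  have i1 : (q - N) * (2 * n%:Z) <= 2 * (S - n%:Z * N) + n%:Z by nia.
  have := i1; rewrite -(ler_int R) => i2.
  move: i2 h1; rewrite !(intrD, intrM, intrN, rmorph1) /=. nra.
Qed.


Lemma bound_conv (R : archiRealFieldType) (z : int) (b : nat) (t : R) :
  `|z|%:~R <= t -> t < b%:R / 4 -> (4 * absz z < b)%N.
Proof.
move=> h1 h2; rewrite -abszE in h1; have h3 : ((absz z)%:R : R) <= t := h1.
rewrite -(ltr_nat R) natrM; lra.
Qed.

Lemma pos_sorted (m : seq nat) : sorted ltn m -> (0 < nth 0%N m 0)%N ->
  forall x, x \in m -> (0 < x)%N.
Proof.
case: m => [|a r] //= hs ha x; rewrite in_cons => /orP[/eqP->//|hx].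
have := order_path_min ltn_trans hs => /allP /(_ x hx) h.
exact: leq_trans ha (ltnW h).
Qed.

Lemma biglcm_fin_gt0 (I : finType) (A : {pred I}) (F : I -> nat) :
  (forall i, i \in A -> 0 < F i)%N -> (0 < \big[lcmn/1%N]_(i in A) F i)%N.
Proof.
move=> h; elim/big_ind: _ => //; first by move=> a b ha hb; rewrite lcmn_gt0 ha hb.
Qed.

Lemma single_div (m : seq nat) (a i : nat) : size m = 1%N -> (i < size m)%N ->
  (a < \big[lcmn/1%N]_(x <- m) x)%N -> (a %/ nth 0%N m i)%N = 0%N.
Proof.
case: m => [|x [|]] //= _; rewrite ltnS leqn0 => /eqP-> /=.
by rewrite big_cons big_nil lcmn1 => ha; rewrite divn_small.
Qed.

Lemma rnd_avg_ord (n B : nat) (f : 'I_n -> int) (c0 : int) :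
  (0 < n)%N ->
  (forall i, 4 * absz (f i - c0) < B)%N ->
  (4 * absz (rnd ((n%:R^-1 * \sum_(i < n) (f i)%:~R) : rat) - c0) < B)%N.
Proof.
move=> hn hf.
have := @rnd_avg _ (mem 'I_n) B f c0.
rewrite card_ord => /(_ hn (fun i _ => hf i)).
congr (_ < _)%N; congr absz; congr (_ - _); congr rnd; congr (_ * _).
Qed.

Lemma dsum_intr (F : pzRingType) (s : nat) (Lf : 'I_s -> nat) (g : forall j, 'I_(Lf j) -> int) :
  (\sum_(j < s) \sum_(i < Lf j) (g j i)%:~R : F) = (\sum_(j < s) \sum_(i < Lf j) g j i)%:~R.
Proof. by rewrite rmorph_sum; apply: eq_bigr => j _; rewrite rmorph_sum. Qed.

Lemma dsum_bound1 (R : archiRealFieldType) (s : nat) (Lf : 'I_s -> nat)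
  (D : forall j, 'I_(Lf j) -> int) (tau : 'I_s -> R) :
  (forall j i, (`|D j i|)%:~R <= tau j) ->
  (\sum_(j < s) \sum_(i < Lf j) D j i)%:~R <= \sum_(j < s) (Lf j)%:R * tau j.
Proof.
move=> h; rewrite -dsum_intr; apply: ler_sum => j _.
have h' : forall i : 'I_(Lf j), true -> (D j i)%:~R <= tau j.
  by move=> i _; apply: le_trans (h j i); rewrite ler_int ler_norm.
apply: le_trans (ler_sum _ h') _.
by rewrite sumr_const card_ord mulr_natl.
Qed.

Lemma dsum_bound (R : archiRealFieldType) (s : nat) (Lf : 'I_s -> nat)
  (D : forall j, 'I_(Lf j) -> int) (tau : 'I_s -> R) :
  (forall j i, (`|D j i|)%:~R <= tau j) ->
  ((\sum_(j < s) \sum_(i < Lf j) D j i)%:~R <= \sum_(j < s) (Lf j)%:R * tau j) /\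
  ((- \sum_(j < s) \sum_(i < Lf j) D j i)%:~R <= \sum_(j < s) (Lf j)%:R * tau j).
Proof.
move=> h; split; first exact: dsum_bound1.
have -> : - \sum_(j < s) \sum_(i < Lf j) D j i = \sum_(j < s) \sum_(i < Lf j) - D j i.
  by rewrite -sumrN; apply: eq_bigr => j _; rewrite -sumrN.
by apply: dsum_bound1 => j i; rewrite normrN.
Qed.

Theorem theorem4 (s K : nat) (M : 'I_s -> seq nat) (T : 'I_K -> {set 'I_s})
  (N : nat) (rt : 'I_s -> nat -> int)
  (R : archiRealFieldType) (tau : 'I_s -> R)
  (k1 : 'I_s -> nat) (k2 : 'I_K -> nat) (k3 : nat) (tsel : 'I_s -> 'I_K) :
  (2 <= s)%N -> (2 <= K)%N ->
  (forall j, 0 < L M j)%N ->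
  (forall j, 0 < Mji M j 0)%N ->
  (forall j, sorted ltn (M j)) ->
  injective (delta M) ->
  (forall t, T t != set0) ->
  \bigcup_(t < K) T t = [set: 'I_s] ->
  injective (xi M T) ->
  (N < \big[lcmn/1%N]_(j : 'I_s) delta M j)%N ->
  (forall j i, (i < L M j)%N -> 0 <= rt j i <= (Mji M j i)%:Z - 1) ->
  (forall j i, (i < L M j)%N ->
     (`|rt j i - (N %% Mji M j i)%:Z|)%:~R <= tau j) ->
  (forall j, tau j < Gb M j) ->
  (forall j t, j \in T t -> tau j < Ups_t M T t) ->
  (forall j, tau j < Ups M T) ->
  (* reference indices attain the relevant max-min of pairwise gcds *)
  (forall j, (2 <= L M j)%N -> is_ref (M j) (k1 j)) ->
  (forall t, (2 <= size (Tl T t))%N -> is_ref (deltas M T t) (k2 t)) ->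
  is_ref (xis M T) k3 ->
  (forall j, j \in T (tsel j)) ->
  three_stage_ok M T rt k1 k2 k3
  /\ (forall j i, (i < L M j)%N ->
        nhat M T rt k1 k2 k3 tsel j i = ((N - N %% Mji M j i) %/ Mji M j i)%N%:Z)
  /\ `|Nhat M T rt k1 k2 k3 tsel - N%:Z| <=
       (rnd ((\sum_(j : 'I_s) (L M j)%:R * tau j) / (\sum_(j : 'I_s) (L M j)%:R))).

Proof.
move=> hs hK hL hM0 hsort hdinj hTne hcov hxinj hN hrt hdev hG hUt hU hk1 hk2 hk3 htsel.
have Mpos : forall j x, x \in M j -> (0 < x)%N := fun j => pos_sorted (M j) (hsort j) (hM0 j).
have Mjipos : forall j i, (i < L M j)%N -> (0 < Mji M j i)%N.
  by move=> j i hi; apply: Mpos; exact: mem_nth.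
have dpos : forall j, (0 < delta M j)%N by move=> j; apply: biglcm_gt0; exact: Mpos j.
have Mdvd : forall j i, (i < L M j)%N -> (Mji M j i %| delta M j)%N.
  by move=> j i hi; apply: dvd_biglcm; exact: mem_nth.
have ddvd : forall j t, j \in T t -> (delta M j %| xi M T t)%N.
  by move=> j t hj; exact: (biglcmn_sup j hj (dvdnn _)).
have xpos : forall t, (0 < xi M T t)%N.
  by move=> t; apply: biglcm_fin_gt0 => j _; exact: dpos.
pose Nj j := (N %% delta M j)%N.
have hst1 : forall j, (2 <= L M j)%N -> stage1 M rt k1 j =
    Some [seq (Nj j %/ Mji M j i)%N%:Z | i <- iota 0 (L M j)].
  move=> j hL2; rewrite /stage1 hL2.
  have [hk hm] := hk1 j hL2.
  apply: algA_correct => //.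
  - exact: Mjipos.
  - exact: ltn_pmod (dpos j).
  move=> i hi; rewrite (nth_map 0%N) ?size_iota // nth_iota // add0n.
  rewrite /Nj (modn_dvdm N (Mdvd j i hi)) hm.
  apply: bound_conv (hdev j i hi) _.
  by have := hG j; rewrite /Gb hL2.
have hK1 : forall j i, (i < L M j)%N -> Khat M rt k1 j i = (Nj j %/ Mji M j i)%N%:Z.
  move=> j i hi; case: (leqP 2 (L M j)) => hL2.
    rewrite /Khat hst1 //= (nth_map 0%N) ?size_iota // nth_iota //.
  rewrite /Khat /stage1 leqNgt hL2 /=.
  have hL1 : L M j = 1%N by have := hL j; lia.
  rewrite single_div //. by case: (i) => [|i0] /=; rewrite ?nth_nil.
  have h := ltn_pmod N (dpos j); exact: h.
have hN1 : forall j (B : nat), tau j < B%:R / 4 ->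
    (4 * absz (Nhat1 M rt k1 j - (Nj j)%:Z) < B)%N.
  move=> j B hB; rewrite /Nhat1; apply: rnd_avg_ord => // i.
  rewrite hK1 //.
  have e1 := divn_eq (Nj j) (Mji M j i).
  have e2 : (Nj j %% Mji M j i = N %% Mji M j i)%N by rewrite /Nj (modn_dvdm N (Mdvd j i (ltn_ord i))).
  have -> : (Nj j %/ Mji M j i)%N%:Z * (Mji M j i)%:Z + rt j i - (Nj j)%:Z =
     rt j i - (N %% Mji M j i)%N%:Z.
    move: e1 e2; set a := (Nj j %/ _)%N; set b := (Nj j %% _)%N; set c := (N %% _)%N.
    move: (Nj j) (Mji M j i) => x y e1 e2. lia.
  exact: bound_conv (hdev j i (ltn_ord i)) hB.
pose j0 : 'I_s := Ordinal (ltnW hs).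
pose t0 : 'I_K := Ordinal (ltnW hK).
pose Pt t := (N %% xi M T t)%N.
have lcm_deltas : forall t, \big[lcmn/1%N]_(m <- deltas M T t) m = xi M T t.
  by move=> t; rewrite /deltas big_map /Tl big_enum.
have hst2 : forall t, (2 <= size (Tl T t))%N -> stage2 M T rt k1 k2 t =
    Some [seq (Pt t %/ nth 0%N (deltas M T t) i)%N%:Z | i <- iota 0 (size (deltas M T t))].
  move=> t hL2; rewrite /stage2 hL2.
  have [hk hm] := hk2 t hL2.
  apply: algA_correct => //.
  - move=> i hi; have /mapP[j _ ->] := mem_nth 0%N hi; exact: dpos.
  - by rewrite lcm_deltas; apply: ltn_pmod.
  move=> i hi; rewrite /deltas size_map in hi.
  have hj : nth j0 (Tl T t) i \in T t by rewrite -mem_enum; exact: mem_nth.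
  rewrite (nth_map j0) // /deltas (nth_map j0) //.
  rewrite /Pt (modn_dvdm N (ddvd _ _ hj)) hm -/(Nj _).
  apply: hN1; have := hUt _ _ hj; by rewrite /Ups_t hL2.
have cardT : forall t, #|T t| = size (Tl T t) by move=> t; rewrite cardE.
have cardT0 : forall t, (0 < #|T t|)%N by move=> t; rewrite card_gt0 hTne.
have hH : forall t j, j \in T t -> Hhat M T rt k1 k2 t j = (Pt t %/ delta M j)%N%:Z.
  move=> t j hj; have hjT : j \in Tl T t by rewrite mem_enum.
  case: (leqP 2 (size (Tl T t))) => hL2.
    rewrite /Hhat hst2 //= (nth_map 0%N) ?size_iota ?size_map ?index_mem //.
    rewrite nth_iota ?index_mem // add0n /deltas (nth_map j0) ?index_mem //.
    by rewrite nth_index.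
  rewrite /Hhat /stage2 leqNgt hL2 /=.
  have h1 : #|T t| == 1%N by have := cardT0 t; rewrite cardT; lia.
  have [x hx] := cards1P h1.
  move: hj; rewrite hx in_set1 => /eqP ->.
  have -> : (Pt t %/ delta M x = 0)%N.
    by rewrite divn_small // /Pt /xi hx big_set1; apply: ltn_pmod.
  by case: (index _ _) => [|n] //=; rewrite nth_nil.
have hP : forall t, (4 * absz (Phat M T rt k1 k2 t - (Pt t)%:Z) < maxmin (xis M T))%N.
  move=> t; rewrite /Phat; apply: rnd_avg; first exact: cardT0.
  move=> j hj; rewrite hH //.
  have e1 := divn_eq (Pt t) (delta M j).
  have e2 : (Pt t %% delta M j = Nj j)%N by rewrite /Pt /Nj (modn_dvdm N (ddvd _ _ hj)).
  have -> : (Pt t %/ delta M j)%N%:Z * (delta M j)%:Z + Nhat1 M rt k1 j - (Pt t)%:Z =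
     Nhat1 M rt k1 j - (Nj j)%:Z.
    move: e1 e2; set a := (Pt t %/ _)%N; set b := (Pt t %% _)%N.
    move: (Pt t) (delta M j) (Nj j) => x y z e1 e2. lia.
  by apply: hN1; exact: hU.
have lcm_xis : (N < \big[lcmn/1%N]_(m <- xis M T) m)%N.
  apply: leq_trans hN _; apply: dvdn_leq.
    by apply: biglcm_gt0 => m /mapP[t _ ->]; exact: xpos.
  apply/dvdn_biglcmP => j _; apply: dvdn_trans (ddvd _ _ (htsel j)) _.
  by apply: dvd_biglcm; apply: map_f; rewrite mem_enum.
have hst3 : stage3 M T rt k1 k2 k3 =
    Some [seq (N %/ nth 0%N (xis M T) i)%N%:Z | i <- iota 0 (size (xis M T))].
  have [hk hm] := hk3.
  apply: algA_correct => //.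
  - move=> i hi; have /mapP[t _ ->] := mem_nth 0%N hi; exact: xpos.
  move=> i hi; rewrite /xis size_map in hi.
  rewrite (nth_map t0) // /xis (nth_map t0) // hm.
  exact: hP.
have hl : forall t, lhat M T rt k1 k2 k3 t = (N %/ xi M T t)%N%:Z.
  move=> t; have ht : (index t (enum 'I_K) < size (enum 'I_K))%N by rewrite index_mem mem_enum.
  rewrite /lhat hst3 /= (nth_map 0%N) ?size_iota /xis ?size_map //.
  rewrite nth_iota ?(-enumT) //. rewrite add0n (nth_map t0) // nth_index ?mem_enum //.
  all: try by move: ht; rewrite {2}enumT.
have hn : forall j i, (i < L M j)%N ->
    nhat M T rt k1 k2 k3 tsel j i = (N %/ Mji M j i)%N%:Z.
  move=> j i hi; rewrite /nhat hl hH // hK1 //.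
  set t := tsel j.
  have hMd := Mdvd j i hi; have hdx := ddvd _ _ (htsel j).
  have hMx := dvdn_trans hMd hdx.
  have Mp := Mjipos j i hi.
  have e1 : (xi M T t %/ Mji M j i * Mji M j i = xi M T t)%N by rewrite divnK.
  have e2 : (delta M j %/ Mji M j i * Mji M j i = delta M j)%N by rewrite divnK.
  have e3 : (N = N %/ xi M T t * xi M T t + Pt t)%N := divn_eq N (xi M T t).
  have e4 := divn_eq (Pt t) (delta M j).
  have e5 : (Pt t %% delta M j = Nj j)%N by rewrite /Pt /Nj (modn_dvdm N hdx).
  have e6 := divn_eq (Nj j) (Mji M j i).
  have e7 : (Nj j %% Mji M j i = N %% Mji M j i)%N by rewrite /Nj (modn_dvdm N hMd).
  set X := ((N %/ xi M T t) * (xi M T t %/ Mji M j i) + (Pt t %/ delta M j) * (delta M j %/ Mji M j i) + Nj j %/ Mji M j i)%N.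
  have hX : (N = X * Mji M j i + N %% Mji M j i)%N.
    rewrite /X !mulnDl -!mulnA e1 e2.
    move: e3 e4 e5 e6 e7.
    move: (N %/ xi M T t)%N (Pt t %/ delta M j)%N (Nj j %/ Mji M j i)%N => a b c.
    move: (N %% Mji M j i)%N (Pt t %% delta M j)%N (Nj j %% Mji M j i)%N => d e f.
    move: (Pt t) (Nj j) => p q {1}-> -> -> -> ->. by rewrite !addnA.
  have -> : (N %/ Mji M j i)%N = X.
    by rewrite {1}hX divnMDl // divn_small ?addn0 // ltn_pmod.
  by rewrite /X -!PoszM -!PoszD.
split.
  rewrite /three_stage_ok; apply/andP; split; first (apply/andP; split).
  - apply/forallP => j; case: (leqP 2 (L M j)) => hL2; first by rewrite hst1.
    by rewrite /stage1 leqNgt hL2.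
  - apply/forallP => t; case: (leqP 2 (size (Tl T t))) => hL2; first by rewrite hst2.
    by rewrite /stage2 leqNgt hL2.
  - by rewrite hst3.
split.
  move=> j i hi; rewrite hn //; congr Posz.
  have := divn_eq N (Mji M j i); move=> e.
  by rewrite {2}e addnK mulnK // Mjipos.
set n := (\sum_(j < s) L M j)%N.
have n0 : (0 < n)%N by rewrite /n (bigD1 j0) //=; have := hL j0; lia.
have hS : \sum_(j < s) \sum_(i < L M j) (nhat M T rt k1 k2 k3 tsel j i * (Mji M j i)%:Z + rt j i)
    = n%:Z * N%:Z + \sum_(j < s) \sum_(i < L M j) (rt j i - (N %% Mji M j i)%N%:Z).
  have -> : \sum_(j < s) \sum_(i < L M j) (nhat M T rt k1 k2 k3 tsel j i * (Mji M j i)%:Z + rt j i)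
     = \sum_(j < s) \sum_(i < L M j) (N%:Z + (rt j i - (N %% Mji M j i)%N%:Z)).
    apply: eq_bigr => j _; apply: eq_bigr => i _; rewrite hn //.
    have e := divn_eq N (Mji M j i).
    move: e; move: (N %/ Mji M j i)%N (N %% Mji M j i)%N (Mji M j i) => a b c e; lia.
  under eq_bigr => j _ do rewrite big_split /=.
  rewrite big_split /=; congr (_ + _).
  under eq_bigr => j _ do rewrite sumr_const card_ord.
  by rewrite sumrMnr -mulr_natl natz.
rewrite /Nhat -/n.
rewrite (dsum_intr rat s (L M) (fun j i => nhat M T rt k1 k2 k3 tsel j i * (Mji M j i)%:Z + rt j i)).
rewrite hS mulrC rnd_div // -natr_sum -/n.
have [b1 b2] := dsum_bound R s (L M) (fun j i => rt j i - (N %% Mji M j i)%N%:Z)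
  tau (fun j i => hdev j i (ltn_ord i)).
apply: final_core => //.
  by rewrite addrAC subrr add0r.
by rewrite opprD addrA subrr add0r.
Qed.
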